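(* For all $\ell,n\in\{1,\dots,L+1\}$, $\delta\in\{1,2,3,4\}$, $w\in\mathcal W^{(\ell)}$, $q\in\mathcal W^{(n)}$, \[\big|(\mathcal E^{(\ell,\widehat{\mathbf x}^{(\delta)})}w,\mathcal E^{(n,\widehat{\mathbf x}^{(\delta)})}q)_{H^1(\widehat\Omega)}\big|\lesssim\frac{\min\{\widehat h_\ell,\widehat h_n\}}{\max\{\widehat h_\ell,\widehat h_n\}}\Big(p^{-1}\widehat h_\ell|w|^2_{H^1(\widehat\Gamma^{(\delta)})}+p^{-1}\widehat h_n|q|^2_{H^1(\widehat\Gamma^{(\delta)})}+p\,\widehat h_\ell^{-1}\|w\|^2_{L_2(\widehat\Gamma^{(\delta)})}+p\,\widehat h_n^{-1}\|q\|^2_{L_2(\widehat\Gamma^{(\delta)})}\Big).\]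
   Context: Single-patch parametric setting. $\widehat\Omega=(0,1)^2$, $p\ge1$. For $\delta=1,2$, $\Xi^{(\delta)}$ is a $p$-open knot vector on $[0,1]$ (end knots of multiplicity $p+1$, interior multiplicities in $\{1,\dots,p\}$) with distinct breakpoints satisfying $C_3\widehat h\le\zeta^{(\delta)}_{i+1}-\zeta^{(\delta)}_i\le\widehat h$. $\mathcal V=S[p,\Xi^{(1)}]\otimes S[p,\Xi^{(2)}]$, $\mathcal W=\{v|_{\partial\widehat\Omega}:v\in\mathcal V\}$. $(u,v)_{H^1(\widehat\Omega)}:=\int_{\widehat\Omega}\nabla u\cdot\nabla v$; on a side, $|w|_{H^1}$ is the $L_2$ norm of the tangential derivative. Grid hierarchy: $L\ge1$, $\widehat h_\ell:=4^{L-\ell}\widehat h$; for $\delta=1,2$, $\ell=1,\dots,L$ nested breakpoint vectors $Z^{(\delta,\ell)}$ (containing $0,1$, $Z^{(\delta,L)}$ = breakpoints of $\Xi^{(\delta)}$) with $c_0\widehat h_\ell\le$ consecutive differences $\le\widehat h_\ell$; $\Xi^{(\delta,\ell)}$ the $p$-open knot vector with breakpoints $Z^{(\delta,\ell)}$ and simple interior knots. $\gamma:\mathbb R\to\partial\widehat\Omega$ is the 4-periodic map $\gamma(t)=(0,t)$ on $[0,1)$, $(t-1,1)$ on $[1,2)$, $(1,3-t)$ on $[2,3)$, $(4-t,0)$ on $[3,4)$. For $\ell=1,\dots,L$, $\mathcal W^{(\ell)}=\{w\in(S[p,\Xi^{(1,\ell)}]\otimes S[p,\Xi^{(2,\ell)}])|_{\partial\widehat\Omega}: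 w\circ\gamma\in C^{p-1}(\mathbb R)\}$, $\mathcal W^{(L+1)}=\mathcal W$. Sides $\widehat\Gamma^{(\delta)}=\gamma((\delta-1,\delta))$ and vertices $\widehat{\mathbf x}^{(\delta)}=\gamma(\delta-1)$, $\delta=1,\dots,4$; the sides adjacent to $\widehat{\mathbf x}^{(\delta)}$ are $\widehat\Gamma^{(\delta-1)}$ and $\widehat\Gamma^{(\delta)}$ (with $\widehat\Gamma^{(0)}:=\widehat\Gamma^{(4)}$). For each side $\widehat\Gamma^{(\delta)}$ and level $\ell$, $\eta$ is the largest breakpoint (in the direction transversal to the side, of the fine knot vector) not exceeding $\max\{\widehat h_\ell,\text{smallest positive breakpoint}\}$, and $\theta^{(\ell,\widehat\Gamma^{(\delta)})}=\max\{0,1-d/\eta\}^p$ with $d$ the distance to the side. The vertex extension is $\mathcal E^{(\ell,\widehat{\mathbf x}^{(\delta)})}w=w(\widehat{\mathbf x}^{(\delta)})\,\theta^{(\ell,\widehat\Gamma^{(\delta-1)})}\,\theta^{(\ell,\widehat\Gamma^{(\delta)})}$; e.g. for $\widehat{\mathbf x}^{(1)}=(0,0)$: $w(0,0)\max\{0,1-x/\eta_1\}^p\max\{0,1-y/\eta_2\}^p$. $a\lesssim b$ means $a\le cb$ with $c$ depending only on $C_3,c_0$. *)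

(* Defs.v *)
From Stdlib Require Import Reals Lra Lia List.
Open Scope R_scope.

(* ---------- univariate polynomials (coefficient lists, lowest degree first) *)
Definition peval (c : list R) (x : R) : R :=
  fold_right (fun a acc => a + x * acc) 0 c.

Fixpoint pder_aux (n : nat) (c : list R) : list R :=
  match c with
  | nil => nil
  | a :: c' => (INR n * a) :: pder_aux (S n) c'
  end.

Definition pderiv (c : list R) : list R :=
  match c with nil => nil | _ :: c' => pder_aux 1 c' end.

Fixpoint pderivn (k : nat) (c : list R) : list R :=
  match k with O => c | S k' => pderiv (pderivn k' c) end.

(* ---------- knot vectors
   A knot vector on [0,1] is encoded by its list of distinct breakpoints
   together with their multiplicities: [(zeta_0,m_0); ...; (zeta_N,m_N)]. *)
Definition knotvec := list (R * nat).

Definition bp (kv : knotvec) (i : nat) : R := fst (nth i kv (0, 0%nat)).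
Definition mu (kv : knotvec) (i : nat) : nat := snd (nth i kv (0, 0%nat)).

Definition p_open (p : nat) (kv : knotvec) : Prop :=
  (2 <= length kv)%nat /\
  bp kv 0 = 0 /\ bp kv (length kv - 1) = 1 /\
  mu kv 0 = (p + 1)%nat /\ mu kv (length kv - 1) = (p + 1)%nat /\
  (forall i, (S i < length kv)%nat -> bp kv i < bp kv (S i)) /\
  (forall i, (0 < i)%nat -> (S i < length kv)%nat -> (1 <= mu kv i <= p)%nat).

Definition simple_kv (p : nat) (Z : list R) : knotvec :=
  combine Z ((p + 1)%nat :: repeat 1%nat (length Z - 2) ++ ((p + 1)%nat :: nil)).

Definition Sp (p : nat) (kv : knotvec) (f : R -> R) : Prop :=
  exists P : nat -> list R,
    (forall i, (S i < length kv)%nat ->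
       (length (P i) <= p + 1)%nat /\
       forall x, bp kv i <= x <= bp kv (S i) -> f x = peval (P i) x) /\
    (forall i, (0 < i)%nat -> (S i < length kv)%nat ->
       forall k, (k <= p - mu kv i)%nat ->
         peval (pderivn k (P (pred i))) (bp kv i) = peval (pderivn k (P i)) (bp kv i)).

Definition tensor (S1 S2 : (R -> R) -> Prop) (v : R -> R -> R) : Prop :=
  exists l : list ((R -> R) * (R -> R)),
    Forall (fun fg => S1 (fst fg) /\ S2 (snd fg)) l /\
    forall x y, v x y = fold_right (fun fg acc => fst fg x * snd fg y + acc) 0 l.

Definition on_boundary (x y : R) : Prop :=
  0 <= x <= 1 /\ 0 <= y <= 1 /\ (x = 0 \/ x = 1 \/ y = 0 \/ y = 1).

Definition gamma (t : R) : R * R :=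
  let s := t - 4 * IZR (Int_part (t / 4)) in
  if Rlt_dec s 1 then (0, s)
  else if Rlt_dec s 2 then (s - 1, 1)
  else if Rlt_dec s 3 then (1, 3 - s)
  else (4 - s, 0).

Definition wg (w : R -> R -> R) (t : R) : R := let (a, b) := gamma t in w a b.

Fixpoint Ck (k : nat) (f : R -> R) : Prop :=
  match k with
  | O => continuity f
  | S k' => exists f', (forall x, derivable_pt_lim f x (f' x)) /\ Ck k' f'
  end.

(* trace space of S[p,kv1] (x) S[p,kv2]; elements are represented by functions
   on R^2 of which only the values on the boundary matter *)
Definition trace_sp (p : nat) (kv1 kv2 : knotvec) (w : R -> R -> R) : Prop :=
  exists v, tensor (Sp p kv1) (Sp p kv2) v /\
    forall x y, on_boundary x y -> w x y = v x y.

Definition hlev (L : nat) (hhat : R) (l : nat) : R := hhat * 4 ^ L / 4 ^ l.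

Definition Wlev (p L : nat) (Xi : nat -> knotvec) (Zc : nat -> nat -> list R)
    (l : nat) (w : R -> R -> R) : Prop :=
  ((l <= L)%nat ->
     trace_sp p (simple_kv p (Zc 1%nat l)) (simple_kv p (Zc 2%nat l)) w /\
     Ck (p - 1) (wg w)) /\
  (l = S L -> trace_sp p (Xi 1%nat) (Xi 2%nat) w).

Definition gaps_ok (lo hi : R) (Z : list R) : Prop :=
  forall i, (S i < length Z)%nat -> lo <= nth (S i) Z 0 - nth i Z 0 <= hi.

Definition bpvec_ok (lo hi : R) (Z : list R) : Prop :=
  (2 <= length Z)%nat /\ nth 0 Z 0 = 0 /\ nth (length Z - 1) Z 0 = 1 /\
  gaps_ok lo hi Z.

(* side Gamma^(d) = gamma((d-1,d)): 1: x=0, 2: y=1, 3: x=1, 4: y=0 *)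
Definition side_dist (d : nat) (x y : R) : R :=
  match d with 1%nat => x | 2%nat => 1 - y | 3%nat => 1 - x | _ => y end.

Definition trans_dir (d : nat) : nat :=
  match d with 1%nat | 3%nat => 1%nat | _ => 2%nat end.

Definition bp_dist (d : nat) (z : R) : R :=
  match d with 1%nat | 4%nat => z | _ => 1 - z end.

(* smallest positive element (lists considered contain 1 and lie in [0,1]) *)
Definition minpos (ds : list R) : R :=
  fold_right (fun d acc => if Rlt_dec 0 d then Rmin d acc else acc) 1 ds.

(* largest element not exceeding M (lists considered contain 0) *)
Definition maxle (M : R) (ds : list R) : R :=
  fold_right (fun d acc => if Rle_dec d M then Rmax d acc else acc) 0 ds.

Definition eta (Xi : nat -> knotvec) (hl : R) (d : nat) : R :=
  let ds := map (fun kz => bp_dist d (fst kz)) (Xi (trans_dir d)) in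
  maxle (Rmax hl (minpos ds)) ds.

Definition theta (p : nat) (Xi : nat -> knotvec) (hl : R) (d : nat) (x y : R) : R :=
  (Rmax 0 (1 - side_dist d x y / eta Xi hl d)) ^ p.

Definition prev_side (d : nat) : nat := match d with 1%nat => 4%nat | _ => pred d end.

(* vertex x^(d) = gamma(d-1) *)
Definition vext (p : nat) (Xi : nat -> knotvec) (hl : R) (d : nat)
    (w : R -> R -> R) (x y : R) : R :=
  let (a, b) := gamma (INR d - 1) in
  w a b * theta p Xi hl (prev_side d) x y * theta p Xi hl d x y.

Definition int1 (f : R -> R) (a b I : R) : Prop :=
  exists pr : Riemann_integrable f a b, RiemannInt pr = I.

Definition int2 (F : R -> R -> R) (I : R) : Prop :=
  exists g : R -> R,
    (forall y, 0 <= y <= 1 -> int1 (fun x => F x y) 0 1 (g y)) /\ int1 g 0 1 I.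

(* (u,v)_{H^1} = int grad u . grad v ; the partial derivatives are required to
   exist off finitely many grid lines (the functions are piecewise smooth). *)
Definition H1ip (u v : R -> R -> R) (I : R) : Prop :=
  exists (ux uy vx vy : R -> R -> R) (xs ys : list R),
    (forall x y, 0 < x < 1 -> 0 < y < 1 -> ~ In x xs -> ~ In y ys ->
       derivable_pt_lim (fun s => u s y) x (ux x y) /\
       derivable_pt_lim (fun s => u x s) y (uy x y) /\
       derivable_pt_lim (fun s => v s y) x (vx x y) /\
       derivable_pt_lim (fun s => v x s) y (vy x y)) /\
    int2 (fun x y => ux x y * vx x y + uy x y * vy x y) I.

Definition side_L2sq (w : R -> R -> R) (d : nat) (S : R) : Prop :=
  int1 (fun t => (wg w t) ^ 2) (INR d - 1) (INR d) S.

Definition side_H1sq (w : R -> R -> R) (d : nat) (S : R) : Prop :=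
  exists (dw : R -> R) (l : list R),
    (forall t, INR d - 1 < t < INR d -> ~ In t l -> derivable_pt_lim (wg w) t (dw t)) /\
    int1 (fun t => (dw t) ^ 2) (INR d - 1) (INR d) S.

(* Main.v *)
Require Import Defs.
From Stdlib Require Import Reals List Lra Lia Psatz FunctionalExtensionality.
From Coquelicot Require Import Coquelicot.
Open Scope R_scope.

Lemma is_RInt_fin_ext (l : list R) : forall a b (f g : R -> R) v, a <= b ->
  (forall x, a < x < b -> ~ In x l -> f x = g x) -> is_RInt f a b v -> is_RInt g a b v.
Proof.
induction l as [|t l IH]; intros a b f g v Hab Hfg Hf.
- apply is_RInt_ext with f; [|exact Hf].
  intros x Hx; rewrite Rmin_left, Rmax_right in Hx by lra; apply Hfg; auto.
- destruct (Rlt_dec a t) as [H1|H1]; [destruct (Rlt_dec t b) as [H2|H2]|].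
  + assert (Ef : ex_RInt f a b) by (exists v; exact Hf).
    assert (E1 : ex_RInt f a t) by (apply (ex_RInt_Chasles_1 (V:=R_CompleteNormedModule)) with b; [lra|exact Ef]).
    assert (E2 : ex_RInt f t b) by (apply (ex_RInt_Chasles_2 (V:=R_CompleteNormedModule)) with a; [lra|exact Ef]).
    assert (G1 : is_RInt g a t (RInt f a t)).
    { apply IH with f; [lra| |apply (RInt_correct (V:=R_CompleteNormedModule)), E1].
      intros x Hx Hn; apply Hfg; [lra|]. intros [E|E]; [lra|tauto]. }
    assert (G2 : is_RInt g t b (RInt f t b)).
    { apply IH with f; [lra| |apply (RInt_correct (V:=R_CompleteNormedModule)), E2].
      intros x Hx Hn; apply Hfg; [lra|]. intros [E|E]; [lra|tauto]. }
    assert (Ev : v = plus (RInt f a t) (RInt f t b)).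
    { rewrite <- (is_RInt_unique (V:=R_CompleteNormedModule) f a b v Hf).
      apply (is_RInt_unique (V:=R_CompleteNormedModule)), (is_RInt_Chasles (V:=R_CompleteNormedModule)) with t; apply (RInt_correct (V:=R_CompleteNormedModule)); auto. }
    rewrite Ev; apply (is_RInt_Chasles (V:=R_CompleteNormedModule)) with t; auto.
  + apply IH with f; auto. intros x Hx Hn; apply Hfg; auto. intros [E|E]; [lra|tauto].
  + apply IH with f; auto. intros x Hx Hn; apply Hfg; auto. intros [E|E]; [lra|tauto].
Qed.

Lemma int1_is (f : R -> R) a b I : int1 f a b I -> is_RInt f a b I.
Proof.
intros [pr Hpr]. rewrite <- Hpr, <- RInt_Reals. apply (RInt_correct (V:=R_CompleteNormedModule)), ex_RInt_Reals_1, pr.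
Qed.

Definition Cone (f : R -> R) := exists f', (forall x, derivable_pt_lim f x (f' x)) /\ continuity f'.

Lemma dmul (f g : R -> R) x df dg l : derivable_pt_lim f x df -> derivable_pt_lim g x dg ->
  l = df * g x + f x * dg -> derivable_pt_lim (fun y => f y * g y) x l.
Proof. intros H1 H2 ->. apply (derivable_pt_lim_mult f g x df dg H1 H2). Qed.
Lemma dplus (f g : R -> R) x df dg l : derivable_pt_lim f x df -> derivable_pt_lim g x dg ->
  l = df + dg -> derivable_pt_lim (fun y => f y + g y) x l.
Proof. intros H1 H2 ->. apply (derivable_pt_lim_plus f g x df dg H1 H2). Qed.
Lemma dminus (f g : R -> R) x df dg l : derivable_pt_lim f x df -> derivable_pt_lim g x dg ->
  l = df - dg -> derivable_pt_lim (fun y => f y - g y) x l.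
Proof. intros H1 H2 ->. apply (derivable_pt_lim_minus f g x df dg H1 H2). Qed.
Lemma ddivc (f : R -> R) c x df l : derivable_pt_lim f x df ->
  l = df / c -> derivable_pt_lim (fun y => f y / c) x l.
Proof. intros H1 ->. unfold Rdiv. apply (derivable_pt_lim_scal_right f x df (/c) H1). Qed.
Lemma dconst c x : derivable_pt_lim (fun _ => c) x 0.
Proof. apply derivable_pt_lim_const. Qed.
Lemma did x : derivable_pt_lim (fun y => y) x 1.
Proof. apply derivable_pt_lim_id. Qed.
Lemma dcomp (f g : R -> R) x df dg l : derivable_pt_lim g x dg -> derivable_pt_lim f (g x) df ->
  l = df * dg -> derivable_pt_lim (fun y => f (g y)) x l.
Proof. intros H1 H2 ->. apply (derivable_pt_lim_comp g f x dg df H1 H2). Qed.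
Lemma dpow (f : R -> R) n x df l : derivable_pt_lim f x df ->
  l = INR n * f x ^ pred n * df -> derivable_pt_lim (fun y => f y ^ n) x l.
Proof. intros H ->. apply (dcomp (fun y => y ^ n) f x (INR n * f x ^ pred n) df); auto.
  apply derivable_pt_lim_pow. Qed.

Lemma trace1 (f : R -> R) a e : Cone f -> 0 < e ->
  exists f', (forall x, derivable_pt_lim f x (f' x)) /\ continuity f' /\
  (f a)^2 <= 2 / e * RInt (fun x => (f x)^2) a (a+e) + e * RInt (fun x => (f' x)^2) a (a+e).
Proof.
intros [f' [Hd Hc]] He. exists f'; split; [exact Hd|split; [exact Hc|]].
set (h := fun x => (1 - (x - a)/e) * (f x)^2).
set (dh := fun x => -(1/e) * (f x)^2 + (1 - (x-a)/e) * (2 * f x * f' x)).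
assert (Hcf : forall x, continuous f x).
{ intro x. apply continuity_pt_filterlim. apply derivable_continuous_pt. exists (f' x). apply Hd. }
assert (Hcf' : forall x, continuous f' x).
{ intro x. apply continuity_pt_filterlim. apply Hc. }
assert (Hi : is_RInt dh a (a+e) (minus (h (a+e)) (h a))).
{ apply (is_RInt_derive (V:=R_CompleteNormedModule)).
  - intros x _. unfold h, dh. apply is_derive_Reals.
    assert (Hx := Hd x).
    eapply dmul. eapply dminus. apply dconst. eapply ddivc. eapply dminus. apply did.
    apply dconst. reflexivity. reflexivity. reflexivity.
    eapply dpow. exact Hx. reflexivity. simpl. field. lra.
  - intros x _. unfold dh.
    apply @continuous_plus. apply @continuous_mult. apply continuous_const.
    apply @continuous_mult. apply Hcf. apply @continuous_mult. apply Hcf. apply continuous_const.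
    apply @continuous_mult. apply @continuous_minus. apply continuous_const.
    apply @continuous_mult. apply @continuous_minus. apply continuous_id. apply continuous_const.
    apply continuous_const.
    apply @continuous_mult. apply @continuous_mult. apply continuous_const. apply Hcf. apply Hcf'. }
assert (Ex1 : ex_RInt (fun x => (f x)^2) a (a+e)).
{ apply (ex_RInt_continuous (V:=R_CompleteNormedModule)); intros z _. apply @continuous_mult. apply Hcf.
  apply @continuous_mult. apply Hcf. apply continuous_const. }
assert (Ex2 : ex_RInt (fun x => (f' x)^2) a (a+e)).
{ apply (ex_RInt_continuous (V:=R_CompleteNormedModule)); intros z _. apply @continuous_mult. apply Hcf'.
  apply @continuous_mult. apply Hcf'. apply continuous_const. }
assert (Eq : RInt dh a (a+e) = - (f a)^2).
{ rewrite (is_RInt_unique (V:=R_CompleteNormedModule) _ _ _ _ Hi). unfold h, minus, plus, opp; simpl.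
  replace ((1 - (a+e-a)/e)) with 0 by (field; lra). replace (1 - (a-a)/e) with 1 by (field;lra). ring. }
assert (Hk : is_RInt (fun x => plus (plus (scal (2/e) (f x ^2)) (scal e (f' x ^2))) (dh x)) a (a+e)
  (plus (plus (scal (2/e) (RInt (fun x => (f x)^2) a (a+e))) (scal e (RInt (fun x => (f' x)^2) a (a+e))))
    (minus (h (a + e)) (h a)))).
{ apply (is_RInt_plus (V:=R_CompleteNormedModule)); [|exact Hi].
  apply (is_RInt_plus (V:=R_CompleteNormedModule)); apply (is_RInt_scal (V:=R_CompleteNormedModule));
  apply (RInt_correct (V:=R_CompleteNormedModule)); auto. }
assert (Hpos : 0 <= RInt (fun x => plus (plus (scal (2/e) (f x ^2)) (scal e (f' x ^2))) (dh x)) a (a+e)).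
2:{ rewrite (is_RInt_unique (V:=R_CompleteNormedModule) _ _ _ _ Hk) in Hpos.
rewrite (is_RInt_unique (V:=R_CompleteNormedModule) _ _ _ _ Hi) in Eq.
rewrite Eq in Hpos. unfold plus, scal in Hpos; simpl in Hpos; unfold mult in Hpos; simpl in Hpos.
simpl. lra. }
apply RInt_ge_0. lra. eexists; exact Hk.
  intros x Hx. unfold dh, plus, scal; simpl; unfold mult; simpl.
  assert (0 <= 1 - (x-a)/e <= 1).
  { split. apply Rmult_le_reg_r with e; [lra|]. unfold Rdiv. field_simplify; lra.
    assert (0 <= (x-a)/e) by (apply Rdiv_le_0_compat; lra). lra. }
  set (s := 1 - (x-a)/e) in *. set (u := f x) in *. set (w := f' x) in *.
  assert (Hk2 : 0 <= (u/e - e*w)^2 * e) by (apply Rmult_le_pos; [apply pow2_ge_0|lra]).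
  assert (Hk1 : 0 <= (u/e + e*w)^2 * e) by (apply Rmult_le_pos; [apply pow2_ge_0|lra]).
  assert (E1 : (u/e - e*w)^2 * e = u^2/e - 2*u*w*e + e^3*w^2 ) by (field; lra).
  assert (E2 : (u/e + e*w)^2 * e = u^2/e + 2*u*w*e + e^3*w^2 ) by (field; lra).
  assert (-(u^2/e + e*w^2) <= 2*u*w <= u^2/e + e*w^2).
  { assert (0 <= u ^ 2 / e) by (apply Rdiv_le_0_compat; [apply pow2_ge_0|lra]).
    split.
    - assert (0 <= (u + e * w)^2) by apply pow2_ge_0.
      apply Rmult_le_reg_r with e; [lra|]. field_simplify; [|lra]. nra.
    - assert (0 <= (u - e * w)^2) by apply pow2_ge_0.
      apply Rmult_le_reg_r with e; [lra|]. field_simplify; [|lra]. nra. }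
  assert (0 <= u ^ 2 / e) by (apply Rdiv_le_0_compat; [apply pow2_ge_0|lra]).
  assert (0 <= e * w ^ 2) by (apply Rmult_le_pos; [lra|apply pow2_ge_0]).
  replace (2 / e * u^2) with (2 * (u^2/e)) by (field; lra).
  replace (-(1/e) * u^2) with (-(u^2/e)) by (field; lra).
  nra.
Qed.

Notation RCN := R_CompleteNormedModule.

Lemma cont_test a n : forall t, continuous (fun t => (1 - t/a)^n) t.
Proof. intro t. apply continuity_pt_filterlim. reg. Qed.

Lemma trunc (f h : R -> R) m : 0 < m <= 1 -> (forall t, 0 < t < m -> f t = h t) ->
  (forall t, m < t < 1 -> f t = 0) -> (forall t, continuous h t) ->
  is_RInt f 0 1 (RInt h 0 m).
Proof.
intros Hm H1 H2 Hc.
assert (A1 : is_RInt f 0 m (RInt h 0 m)).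
{ apply is_RInt_ext with h. intros x Hx; rewrite Rmin_left, Rmax_right in Hx by lra; symmetry; auto.
  apply (RInt_correct (V:=RCN)). apply (ex_RInt_continuous (V:=RCN)); auto. }
assert (A2 : is_RInt f m 1 0).
{ apply is_RInt_ext with (fun _ => 0). intros x Hx; rewrite Rmin_left, Rmax_right in Hx by lra; symmetry; auto.
  assert (E := is_RInt_const (V:=R_NormedModule) m 1 0).
  replace (scal (1 - m) (0:R_NormedModule)) with 0 in E by (unfold scal; simpl; unfold mult; simpl; ring).
  exact E. }
replace (RInt h 0 m) with (plus (RInt h 0 m) 0) by (unfold plus; simpl; ring).
apply (is_RInt_Chasles (V:=RCN)) with m; auto.
Qed.

Lemma int_pow a n m : 0 < a -> is_RInt (fun t => (1 - t/a)^n) 0 m (a / (INR n + 1) * (1 - (1 - m/a)^(S n))).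
Proof.
intros Ha.
assert (H := is_RInt_derive (V:=RCN) (fun t => - (a / (INR n + 1)) * (1 - t/a)^(S n)) (fun t => (1 - t/a)^n) 0 m).
replace (a / (INR n + 1) * (1 - (1 - m/a)^(S n))) with
  (minus (- (a / (INR n + 1)) * (1 - m/a)^(S n)) (- (a / (INR n + 1)) * (1 - 0/a)^(S n))).
apply H.
- intros x _. apply is_derive_Reals. eapply dmul. apply dconst. eapply dpow. eapply dminus. apply dconst.
  eapply ddivc. apply did. reflexivity. reflexivity. reflexivity. simpl pred.
  rewrite S_INR. field. split; [lra|]. pose proof (pos_INR n); lra.
- intros x _. apply cont_test.
- unfold minus, plus, opp; simpl. replace (1 - 0/a) with 1 by (field; lra). rewrite pow1. ring.
Qed.

Lemma ex_cont (h : R -> R) a b : (forall t, continuous h t) -> ex_RInt h a b.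
Proof. intros; apply (ex_RInt_continuous (V:=RCN)); auto. Qed.

Lemma RInt_prod_le (g k : R -> R) m : 0 <= m -> (forall t, continuous g t) -> (forall t, continuous k t) ->
  (forall t, 0 <= t <= m -> 0 <= g t /\ 0 <= k t <= 1) ->
  0 <= RInt (fun t => g t * k t) 0 m <= RInt g 0 m.
Proof.
intros Hm Hg Hk H. assert (Hgk : forall t, continuous (fun t => g t * k t) t).
{ intro t. apply (continuous_mult (K:=R_AbsRing)); auto. }
split.
- apply RInt_ge_0; auto. apply ex_cont; auto. intros x Hx. destruct (H x) as [? ?]; [lra|]. nra.
- apply RInt_le; auto; try (apply ex_cont; auto). intros x Hx. destruct (H x) as [? ?]; [lra|]. nra.
Qed.

Definition Phi (p : nat) a t := (Rmax 0 (1 - t/a))^p.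
Definition Psi (p : nat) a t := if Rlt_dec t a then INR p / a * (1 - t/a)^(pred p) else 0.

Lemma pow_01 x n : 0 <= x <= 1 -> 0 <= x^n <= 1.
Proof. intros H; induction n; simpl; [lra|nra]. Qed.

Lemma frac01 t a : 0 < a -> 0 <= t <= a -> 0 <= 1 - t/a <= 1.
Proof. intros Ha Ht. assert (0 <= t/a) by (apply Rdiv_le_0_compat; lra).
  assert (t/a <= 1). { apply Rmult_le_reg_r with a; auto. unfold Rdiv; rewrite Rmult_assoc, Rinv_l; lra. }
  lra. Qed.

Lemma int_pow_scal c a n m : 0 < a ->
  is_RInt (fun t => c * (1 - t/a)^n) 0 m (c * (a / (INR n + 1) * (1 - (1 - m/a)^(S n)))).
Proof. intros Ha. apply (is_RInt_scal (V:=R_NormedModule) (fun t => (1 - t/a)^n) 0 m c). apply int_pow; auto. Qed.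

Lemma cont_c_pow c a n t : continuous (fun t => c * (1 - t/a)^n) t.
Proof. apply continuity_pt_filterlim. reg. Qed.

Lemma pow_zero n : (1 <= n)%nat -> 0 ^ n = 0.
Proof. intros; destruct n; [lia|simpl; ring]. Qed.

Lemma rmin_lt a b t : Rmin a b < t -> a < t \/ b < t.
Proof. unfold Rmin; destruct Rle_dec; lra. Qed.

Lemma int_PP p a b : (1 <= p)%nat -> 0 < a -> 0 < b -> exists v,
  is_RInt (fun t => Phi p a t * Phi p b t) 0 1 v /\ 0 <= v /\ v <= a/(INR p+1) /\ v <= b/(INR p+1).
Proof.
intros Hp Ha Hb. set (m := Rmin (Rmin a b) 1).
assert (Hm : 0 < m <= 1) by (unfold m; unfold Rmin; repeat destruct Rle_dec; lra).
assert (Hma : m <= a) by (unfold m; unfold Rmin; repeat destruct Rle_dec; lra).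
assert (Hmb : m <= b) by (unfold m; unfold Rmin; repeat destruct Rle_dec; lra).
exists (RInt (fun t => (1 - t/a)^p * (1 - t/b)^p) 0 m). split; [|split;[|split]].
- apply trunc; auto.
  + intros t Ht. unfold Phi. rewrite !Rmax_right; auto.
    apply frac01; lra. apply frac01; lra.
  + intros t Ht. assert (m = Rmin a b) by (clear -Ht; unfold m in *; unfold Rmin in *; repeat destruct Rle_dec; lra).
    unfold Phi. destruct (Rle_dec t a).
    * assert (t > b) by (destruct (rmin_lt a b t); lra).
      rewrite (Rmax_left 0 (1 - t/b)). rewrite pow_zero; auto; ring.
      assert (t/b >= 1). { apply Rle_ge. apply Rmult_le_reg_r with b; auto. unfold Rdiv; rewrite Rmult_assoc, Rinv_l; lra. }
      lra.
    * rewrite (Rmax_left 0 (1 - t/a)). rewrite pow_zero; auto; ring.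
      assert (t/a >= 1). { apply Rle_ge. apply Rmult_le_reg_r with a; auto. unfold Rdiv; rewrite Rmult_assoc, Rinv_l; lra. }
      lra.
  + intro t. apply continuity_pt_filterlim. reg.
- apply (RInt_prod_le (fun t => (1 - t/a)^p) (fun t => (1 - t/b)^p) m); try lra.
  intro; apply continuity_pt_filterlim; reg. intro; apply continuity_pt_filterlim; reg.
  intros t Ht. split. apply pow_le. apply frac01; lra. apply pow_01, frac01; lra.
- eapply Rle_trans. apply (RInt_prod_le (fun t => (1 - t/a)^p) (fun t => (1 - t/b)^p) m); try lra.
  intro; apply continuity_pt_filterlim; reg. intro; apply continuity_pt_filterlim; reg.
  intros t Ht. split. apply pow_le. apply frac01; lra. apply pow_01, frac01; lra.
   rewrite (is_RInt_unique (V:=RCN) _ _ _ _ (int_pow a p m Ha)).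
  assert (0 <= (1 - m/a)^(S p)) by (apply pow_le, frac01; lra).
  assert (0 < INR p + 1) by (pose proof (pos_INR p); lra).
  assert (0 <= a/(INR p + 1)) by (apply Rdiv_le_0_compat; lra). nra.
- rewrite (RInt_ext (V:=RCN) (fun t => (1 - t/a)^p * (1 - t/b)^p) (fun t => (1 - t/b)^p * (1 - t/a)^p)); [|intros x _; apply Rmult_comm].
  eapply Rle_trans. apply (RInt_prod_le (fun t => (1 - t/b)^p) (fun t => (1 - t/a)^p) m); try lra.
  intro; apply continuity_pt_filterlim; reg. intro; apply continuity_pt_filterlim; reg.
  intros t Ht. split. apply pow_le. apply frac01; lra. apply pow_01, frac01; lra.
  cbv beta; rewrite (is_RInt_unique (V:=RCN) _ _ _ _ (int_pow b p m Hb)).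
  assert (0 <= (1 - m/b)^(S p)) by (apply pow_le, frac01; lra).
  assert (0 < INR p + 1) by (pose proof (pos_INR p); lra).
  assert (0 <= b/(INR p + 1)) by (apply Rdiv_le_0_compat; lra). nra.
Qed.

Lemma RInt_ext_R (f g : R -> R) a b : (forall x, f x = g x) -> RInt f a b = RInt g a b.
Proof. intros H; apply RInt_ext; intros; apply H. Qed.

Lemma INR_pred p : (1 <= p)%nat -> INR (pred p) + 1 = INR p.
Proof. intros; destruct p; [lia|]. simpl pred. rewrite S_INR; ring. Qed.

Lemma int_DD p a b : (1 <= p)%nat -> 0 < a -> 0 < b -> exists v,
  is_RInt (fun t => Psi p a t * Psi p b t) 0 1 v /\ 0 <= v /\ v <= INR p / a /\ v <= INR p / b.
Proof.
intros Hp Ha Hb. set (m := Rmin (Rmin a b) 1).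
assert (Hm : 0 < m <= 1) by (unfold m; unfold Rmin; repeat destruct Rle_dec; lra).
assert (Hma : m <= a) by (unfold m; unfold Rmin; repeat destruct Rle_dec; lra).
assert (Hmb : m <= b) by (unfold m; unfold Rmin; repeat destruct Rle_dec; lra).
assert (HP : 0 < INR p) by (apply lt_0_INR; lia).
assert (HPa : 0 < INR p / a) by (apply Rdiv_lt_0_compat; lra).
assert (HPb : 0 < INR p / b) by (apply Rdiv_lt_0_compat; lra).
exists (RInt (fun t => (INR p / a * (1 - t/a)^(pred p)) * (INR p / b * (1 - t/b)^(pred p))) 0 m).
split; [|split;[|split]].
- apply trunc; auto.
  + intros t Ht. unfold Psi. destruct Rlt_dec; [|lra]. destruct Rlt_dec; [|lra]. reflexivity.
  + intros t Ht. assert (m = Rmin a b) by (clear -Ht; unfold m in *; unfold Rmin in *; repeat destruct Rle_dec; lra).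
    unfold Psi. destruct (Rlt_dec t a); destruct (Rlt_dec t b); try ring.
    destruct (rmin_lt a b t); lra.
  + intro t. apply continuity_pt_filterlim. reg.
- apply RInt_ge_0; [lra| |].
  apply ex_cont. intro; apply continuity_pt_filterlim; reg.
  intros t Ht. apply Rmult_le_pos; (apply Rmult_le_pos; [lra|apply pow_le; apply frac01; lra]).
- rewrite (RInt_ext_R _ (fun t => ((INR p / a * INR p / b) * (1 - t/b)^(pred p)) * (1 - t/a)^(pred p)));
    [|intros; field; lra].
  eapply Rle_trans. apply (RInt_prod_le (fun t => (INR p / a * INR p / b) * (1 - t/b)^(pred p)) (fun t => (1 - t/a)^(pred p)) m); try lra.
  intro; apply continuity_pt_filterlim; reg. intro; apply continuity_pt_filterlim; reg.
  intros t Ht. split. apply Rmult_le_pos. unfold Rdiv; repeat apply Rmult_le_pos; try lra; left; apply Rinv_0_lt_compat; lra.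
  apply pow_le. apply frac01; lra. apply pow_01, frac01; lra.
  cbv beta; rewrite (is_RInt_unique (V:=RCN) _ _ _ _ (int_pow_scal _ b (pred p) m Hb)).
  rewrite INR_pred by auto. replace (S (pred p)) with p by lia.
  assert (0 <= (1 - m/b)^p) by (apply pow_le, frac01; lra).
  replace (INR p / a * INR p / b * (b / INR p * (1 - (1 - m / b) ^ p))) with (INR p / a * (1 - (1 - m / b) ^ p))
   by (field; repeat split; lra). nra.
- rewrite (RInt_ext_R _ (fun t => ((INR p / b * INR p / a) * (1 - t/a)^(pred p)) * (1 - t/b)^(pred p)));
    [|intros; field; lra].
  eapply Rle_trans. apply (RInt_prod_le (fun t => (INR p / b * INR p / a) * (1 - t/a)^(pred p)) (fun t => (1 - t/b)^(pred p)) m); try lra.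
  intro; apply continuity_pt_filterlim; reg. intro; apply continuity_pt_filterlim; reg.
  intros t Ht. split. apply Rmult_le_pos. unfold Rdiv; repeat apply Rmult_le_pos; try lra; left; apply Rinv_0_lt_compat; lra.
  apply pow_le. apply frac01; lra. apply pow_01, frac01; lra.
  cbv beta; rewrite (is_RInt_unique (V:=RCN) _ _ _ _ (int_pow_scal _ a (pred p) m Ha)).
  rewrite INR_pred by auto. replace (S (pred p)) with p by lia.
  assert (0 <= (1 - m/a)^p) by (apply pow_le, frac01; lra).
  replace (INR p / b * INR p / a * (a / INR p * (1 - (1 - m / a) ^ p))) with (INR p / b * (1 - (1 - m / a) ^ p))
   by (field; repeat split; lra). nra.
Qed.


Definition sg (b : bool) (x : R) := if b then 1 - x else x.
Definition sgd (b : bool) := if b then -1 else 1.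

Lemma is_RInt_R_eq (f g : R -> R) a b v w : is_RInt f a b v -> (forall x, f x = g x) -> v = w -> is_RInt g a b w.
Proof. intros H E ->. apply is_RInt_ext with f; auto. Qed.

Lemma is_RInt_lin (f g : R -> R) a b If Ig c1 c2 : is_RInt f a b If -> is_RInt g a b Ig ->
  is_RInt (fun x => c1 * f x + c2 * g x) a b (c1 * If + c2 * Ig).
Proof.
intros Hf Hg.
exact (is_RInt_plus (V:=R_NormedModule) _ _ _ _ _ _ (is_RInt_scal (V:=R_NormedModule) _ _ _ c1 _ Hf)
  (is_RInt_scal (V:=R_NormedModule) _ _ _ c2 _ Hg)).
Qed.

Lemma is_RInt_sc (f : R -> R) a b If c : is_RInt f a b If -> is_RInt (fun x => c * f x) a b (c * If).
Proof. intros Hf. exact (is_RInt_scal (V:=R_NormedModule) _ _ _ c _ Hf). Qed.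

Lemma refl_int (h : R -> R) v b : is_RInt h 0 1 v -> is_RInt (fun x => h (sg b x)) 0 1 v.
Proof.
intros H. destruct b; simpl.
- assert (H1 := is_RInt_swap (V:=R_NormedModule) h 1 0 v).
  assert (H2 : is_RInt h ((-1) * 0 + 1) ((-1) * 1 + 1) (opp v)).
  { replace ((-1) * 0 + 1) with 1 by ring. replace ((-1) * 1 + 1) with 0 by ring.
    apply (is_RInt_swap (V:=R_NormedModule)). exact H. }
  assert (H3 := is_RInt_comp_lin (V:=R_NormedModule) h (-1) 1 0 1 (opp v) H2).
  apply (is_RInt_R_eq _ _ _ _ _ _ (is_RInt_sc _ _ _ _ (-1) H3)). intro x. unfold scal; simpl; unfold mult; simpl.
  replace (-1 * x + 1) with (1 - x) by ring. ring. unfold opp; simpl. ring.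
- exact H.
Qed.

Lemma dloc (f g : R -> R) x l d : 0 < d -> (forall y, Rabs (y - x) < d -> f y = g y) ->
  derivable_pt_lim f x l -> derivable_pt_lim g x l.
Proof.
intros Hd H Hf. apply is_derive_Reals. apply is_derive_ext_loc with f; [|apply is_derive_Reals; exact Hf].
exists (mkposreal d Hd). intros y Hy. apply H. exact Hy.
Qed.

Lemma dsg b x : derivable_pt_lim (sg b) x (sgd b).
Proof. destruct b; simpl.
- eapply dminus. apply dconst. apply did. ring.
- apply did. Qed.

Lemma sg_diff b x y : Rabs (sg b y - sg b x) = Rabs (y - x).
Proof. destruct b; simpl; [|reflexivity]. replace (1 - y - (1 - x)) with (- (y - x)) by ring. apply Rabs_Ropp. Qed.

Lemma dPhi p a b x : (1 <= p)%nat -> 0 < a -> sg b x <> a ->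
  derivable_pt_lim (fun s => Phi p a (sg b s)) x (- sgd b * Psi p a (sg b x)).
Proof.
intros Hp Ha Hx. destruct (Rlt_dec (sg b x) a) as [Hl|Hl].
- apply dloc with (fun s => (1 - sg b s / a)^p) (a - sg b x); [lra| |].
  + intros y Hy. rewrite <- (sg_diff b x y) in Hy. unfold Phi. rewrite Rmax_right; auto.
    assert (sg b y - sg b x < a - sg b x) by (apply Rabs_lt_between in Hy; lra).
    assert (sg b y / a <= 1). { apply Rmult_le_reg_r with a; auto. unfold Rdiv; rewrite Rmult_assoc, Rinv_l; lra. }
    lra.
  + unfold Psi. destruct Rlt_dec; [|lra].
    eapply dpow. eapply dminus. apply dconst. eapply ddivc. apply dsg. reflexivity. reflexivity.
    field. lra.
- assert (Hg : a < sg b x) by lra.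
  apply dloc with (fun _ => 0) (sg b x - a); [lra| |].
  + intros y Hy. rewrite <- (sg_diff b x y) in Hy. unfold Phi. rewrite Rmax_left. rewrite pow_zero; auto.
    assert (sg b x - a > - (sg b y - sg b x)) by (apply Rabs_lt_between in Hy; lra).
    assert (sg b y / a > 1). { apply Rmult_lt_reg_r with a; auto. unfold Rdiv; rewrite Rmult_assoc, Rinv_l; lra. }
    lra.
  + unfold Psi. destruct Rlt_dec; [lra|]. replace (- sgd b * 0) with 0 by ring. apply dconst.
Qed.

Lemma sgd2 b : sgd b * sgd b = 1.
Proof. destruct b; simpl; ring. Qed.

Lemma uniq_R (f : R -> R) a b u v : is_RInt f a b u -> is_RInt f a b v -> u = v.
Proof. intros H1 H2. rewrite <- (is_RInt_unique (V:=RCN) f a b u H1). exact (is_RInt_unique (V:=RCN) f a b v H2). Qed.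

Lemma sg_ne b x a : x <> a -> x <> 1 - a -> sg b x <> a.
Proof. destruct b; simpl; intros; lra. Qed.

Lemma core2D p W Q a1 b1 a2 b2 (sx sy : bool) I : (1 <= p)%nat -> 0 < a1 -> 0 < b1 -> 0 < a2 -> 0 < b2 ->
  H1ip (fun x y => W * Phi p a1 (sg sx x) * Phi p a2 (sg sy y))
       (fun x y => Q * Phi p b1 (sg sx x) * Phi p b2 (sg sy y)) I ->
  exists IA IB Ic1 Ic2, I = W * Q * (IA * Ic1 + IB * Ic2) /\
   0 <= IA /\ IA <= INR p / a1 /\ IA <= INR p / b1 /\
   0 <= Ic1 /\ Ic1 <= a2 / (INR p + 1) /\ Ic1 <= b2 / (INR p + 1) /\
   0 <= IB /\ IB <= a1 / (INR p + 1) /\ IB <= b1 / (INR p + 1) /\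
   0 <= Ic2 /\ Ic2 <= INR p / a2 /\ Ic2 <= INR p / b2.
Proof.
intros Hp H1 H2 H3 H4 (ux&uy&vx&vy&xs&ys&Hd&g&Hg&Hi).
destruct (int_DD p a1 b1) as (IA&HA&HA1&HA2&HA3); auto.
destruct (int_PP p a1 b1) as (IB&HB&HB1&HB2&HB3); auto.
destruct (int_PP p a2 b2) as (Ic1&HC&HC1&HC2&HC3); auto.
destruct (int_DD p a2 b2) as (Ic2&HD&HD1&HD2&HD3); auto.
exists IA, IB, Ic1, Ic2. split; [|repeat split; auto].
set (DDx := fun x => Psi p a1 (sg sx x) * Psi p b1 (sg sx x)).
set (PPx := fun x => Phi p a1 (sg sx x) * Phi p b1 (sg sx x)).
set (DDy := fun y => Psi p a2 (sg sy y) * Psi p b2 (sg sy y)).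
set (PPy := fun y => Phi p a2 (sg sy y) * Phi p b2 (sg sy y)).
assert (IDDx : is_RInt DDx 0 1 IA) by exact (refl_int _ _ sx HA).
assert (IPPx : is_RInt PPx 0 1 IB) by exact (refl_int _ _ sx HB).
assert (IPPy : is_RInt PPy 0 1 Ic1) by exact (refl_int _ _ sy HC).
assert (IDDy : is_RInt DDy 0 1 Ic2) by exact (refl_int _ _ sy HD).
set (xs' := a1 :: 1 - a1 :: b1 :: 1 - b1 :: xs).
set (ys' := a2 :: 1 - a2 :: b2 :: 1 - b2 :: ys).
assert (Hpt : forall x y, 0 < x < 1 -> 0 < y < 1 -> ~ In x xs' -> ~ In y ys' ->
  W * Q * (DDx x * PPy y + PPx x * DDy y) = ux x y * vx x y + uy x y * vy x y).
{ intros x y Hx Hy Hnx Hny.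
  assert (nx : ~ In x xs) by (intro; apply Hnx; simpl; tauto).
  assert (ny : ~ In y ys) by (intro; apply Hny; simpl; tauto).
  destruct (Hd x y Hx Hy nx ny) as (D1&D2&D3&D4).
  assert (xa1 : sg sx x <> a1) by (apply sg_ne; intro E; apply Hnx; [left|right;left]; auto).
  assert (xb1 : sg sx x <> b1) by (apply sg_ne; intro E; apply Hnx; [do 2 right; left|do 3 right; left]; auto).
  assert (ya2 : sg sy y <> a2) by (apply sg_ne; intro E; apply Hny; [left|right;left]; auto).
  assert (yb2 : sg sy y <> b2) by (apply sg_ne; intro E; apply Hny; [do 2 right; left|do 3 right; left]; auto).
  assert (E1 : ux x y = W * (- sgd sx * Psi p a1 (sg sx x)) * Phi p a2 (sg sy y)).
  { eapply uniqueness_limite. exact D1. eapply dmul. eapply dmul. apply dconst. apply dPhi; auto.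
    reflexivity. apply dconst. ring. }
  assert (E2 : uy x y = W * Phi p a1 (sg sx x) * (- sgd sy * Psi p a2 (sg sy y))).
  { eapply uniqueness_limite. exact D2. eapply dmul. apply dconst. apply dPhi; auto. ring. }
  assert (E3 : vx x y = Q * (- sgd sx * Psi p b1 (sg sx x)) * Phi p b2 (sg sy y)).
  { eapply uniqueness_limite. exact D3. eapply dmul. eapply dmul. apply dconst. apply dPhi; auto.
    reflexivity. apply dconst. ring. }
  assert (E4 : vy x y = Q * Phi p b1 (sg sx x) * (- sgd sy * Psi p b2 (sg sy y))).
  { eapply uniqueness_limite. exact D4. eapply dmul. apply dconst. apply dPhi; auto. ring. }
  rewrite E1, E2, E3, E4. unfold DDx, PPx, DDy, PPy. destruct sx, sy; simpl; ring. }
assert (Hgy : forall y, 0 < y < 1 -> ~ In y ys' -> g y = W * Q * (IA * PPy y + IB * DDy y)).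
{ intros y Hy Hny.
  assert (G1 := int1_is _ _ _ _ (Hg y ltac:(lra))).
  assert (G2 : is_RInt (fun x => W * Q * (DDx x * PPy y + PPx x * DDy y)) 0 1 (W * Q * (IA * PPy y + IB * DDy y))).
  { apply (is_RInt_R_eq _ _ _ _ _ _ (is_RInt_sc _ _ _ _ (W * Q) (is_RInt_lin _ _ _ _ _ _ (PPy y) (DDy y) IDDx IPPx))).
    intro; simpl; rewrite (Rmult_comm (PPy y)), (Rmult_comm (DDy y)); reflexivity. rewrite (Rmult_comm (PPy y)), (Rmult_comm (DDy y)); reflexivity. }
  assert (G3 := is_RInt_fin_ext xs' 0 1 _ _ _ ltac:(lra) (fun x Hx Hnx => Hpt x y Hx Hy Hnx Hny) G2).
  exact (uniq_R _ _ _ _ _ G1 G3). }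
assert (O1 : is_RInt (fun y => W * Q * (IA * PPy y + IB * DDy y)) 0 1 (W * Q * (IA * Ic1 + IB * Ic2))).
{ exact (is_RInt_sc _ _ _ _ (W * Q) (is_RInt_lin _ _ _ _ _ _ IA IB IPPy IDDy)). }
assert (O2 := is_RInt_fin_ext ys' 0 1 _ g _ ltac:(lra) (fun y Hy Hny => eq_sym (Hgy y Hy Hny)) O1).
exact (uniq_R _ _ _ _ _ (int1_is _ _ _ _ Hi) O2).
Qed.

Lemma maxle_le M ds : 0 <= M -> maxle M ds <= M.
Proof. intros HM; induction ds as [|d ds IH]; simpl; [lra|]. destruct Rle_dec; [apply Rmax_lub|]; lra. Qed.

Lemma maxle_ge M ds e : In e ds -> e <= M -> e <= maxle M ds.
Proof. induction ds as [|d ds IH]; simpl; [tauto|]. intros [->|H] He.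
- destruct Rle_dec; [apply Rmax_l|lra].
- destruct Rle_dec; [eapply Rle_trans; [apply IH; auto|apply Rmax_r]|auto]. Qed.

Lemma minpos_le ds e : In e ds -> 0 < e -> minpos ds <= e.
Proof. induction ds as [|d ds IH]; simpl; [tauto|]. intros [->|H] He.
- destruct Rlt_dec; [apply Rmin_l|lra].
- destruct Rlt_dec; [eapply Rle_trans; [apply Rmin_r|apply IH; auto]|auto]. Qed.

Lemma minpos_in ds : minpos ds = 1 \/ In (minpos ds) ds.
Proof. induction ds as [|d ds IH]; simpl; [auto|]. destruct Rlt_dec; [|tauto].
  unfold Rmin; destruct Rle_dec; [right; left; auto|]. destruct IH; [left; auto|right; right; auto]. Qed.

Lemma minpos_ge ds lo : lo <= 1 -> (forall e, In e ds -> 0 < e -> lo <= e) -> lo <= minpos ds.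
Proof. intros H1 H; induction ds as [|d ds IH]; simpl; [lra|]. destruct Rlt_dec.
- apply Rmin_glb. apply H; simpl; auto. apply IH; intros; apply H; simpl; auto.
- apply IH; intros; apply H; simpl; auto. Qed.

Definition grid (z : nat -> R) (N : nat) (lo hi : R) :=
  z 0%nat = 0 /\ z N = 1 /\ forall i, (i < N)%nat -> lo <= z (S i) - z i <= hi.

Lemma grid_mono z N lo hi : 0 < lo -> grid z N lo hi -> forall i j, (i <= j <= N)%nat -> z i <= z j.
Proof. intros Hlo (H0&HN&Hg) i j Hij. destruct Hij as [Hij HjN].
  induction Hij as [|j Hij IH]; [lra|]. assert (Hx := Hg j ltac:(lia)). specialize (IH ltac:(lia)). lra. Qed.

Lemma grid_01 z N lo hi : 0 < lo -> grid z N lo hi -> forall i, (i <= N)%nat -> 0 <= z i <= 1.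
Proof. intros Hlo G i Hi. pose proof G as (H0&HN&_). split.
  rewrite <- H0; apply (grid_mono z N lo hi); auto; lia.
  rewrite <- HN; apply (grid_mono z N lo hi); auto; lia. Qed.

Lemma grid_N z N lo hi : 0 < lo -> grid z N lo hi -> (1 <= N)%nat.
Proof. intros Hlo (H0&HN&_). destruct N; [rewrite H0 in HN; lra|lia]. Qed.

Lemma grid_pos z N lo hi : 0 < lo -> grid z N lo hi -> forall i, (i <= N)%nat -> 0 < z i -> lo <= z i.
Proof. intros Hlo G i Hi Hz. pose proof G as (H0&HN&Hg). destruct i. rewrite H0 in Hz; lra.
  assert (z 1%nat <= z (S i)) by (apply (grid_mono z N lo hi); auto; lia).
  assert (Hx := Hg 0%nat ltac:(lia)). lra. Qed.

Lemma grid_near z N lo hi : 0 < lo -> grid z N lo hi -> forall t, 0 <= t <= 1 ->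
  exists i, (i <= N)%nat /\ t - hi <= z i <= t.
Proof.
intros Hlo G t Ht. pose proof G as (H0&HN&Hg). assert (HN1 := grid_N z N lo hi Hlo G).
assert (Hhi := Hg 0%nat ltac:(lia)).
assert (C : forall m k, (k + m = N)%nat -> z k <= t -> exists i, (i <= N)%nat /\ t - hi <= z i <= t).
{ induction m as [|m IH]; intros k Hk Hz.
  - exists k; split; [lia|]. replace k with N in Hz |- * by lia. lra.
  - destruct (Rle_dec (z (S k)) t) as [H|H].
    + apply (IH (S k)); auto; lia.
    + exists k; split; [lia|]. assert (Hx := Hg k ltac:(lia)). lra. }
apply (C N 0%nat); [lia|lra].
Qed.

Lemma grid_rev z N lo hi : grid z N lo hi -> grid (fun i => 1 - z (N - i)%nat) N lo hi.
Proof. intros (H0&HN&Hg). split; [|split].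
- rewrite Nat.sub_0_r; lra.
- rewrite Nat.sub_diag; lra.
- intros i Hi. replace (N - i)%nat with (S (N - S i)) by lia. assert (Hx := Hg (N - S i)%nat ltac:(lia)). lra. Qed.

Definition ds_ok (lo hi : R) (ds : list R) :=
  (forall e, In e ds -> 0 <= e <= 1) /\ In 1 ds /\ (forall e, In e ds -> 0 < e -> lo <= e) /\
  (exists e, In e ds /\ 0 < e <= hi) /\ (forall t, 0 <= t <= 1 -> exists e, In e ds /\ t - hi <= e <= t).

Lemma grid_ds z N lo hi ds : 0 < lo -> grid z N lo hi ->
  (forall e, In e ds <-> exists i, (i <= N)%nat /\ e = z i) -> ds_ok lo hi ds.
Proof.
intros Hlo G Hds. pose proof G as (H0&HN&Hg). assert (HN1 := grid_N z N lo hi Hlo G).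
split; [|split; [|split; [|split]]].
- intros e He. apply Hds in He as (i&Hi&->). apply (grid_01 z N lo hi); auto.
- apply Hds. exists N; auto.
- intros e He Hp. apply Hds in He as (i&Hi&->). apply (grid_pos z N lo hi); auto.
- exists (z 1%nat). split. apply Hds; exists 1%nat; split; auto.
  assert (Hx := Hg 0%nat ltac:(lia)). lra.
- intros t Ht. destruct (grid_near z N lo hi Hlo G t Ht) as (i&Hi&Hz). exists (z i); split; auto.
  apply Hds; exists i; auto.
Qed.

Lemma eta_core lo hi h ds : 0 < lo -> lo <= hi -> 0 < h -> ds_ok lo hi ds ->
  let E := maxle (Rmax h (minpos ds)) ds in
  E <= Rmax h hi /\ lo <= E /\ Rmin h 1 - hi <= E.
Proof.
intros Hlo Hlh Hh (D1&D2&D3&D4&D5). simpl.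
destruct D4 as (e4&He4&He4').
assert (Mp1 : minpos ds <= e4) by (apply minpos_le; auto; lra).
assert (lo <= 1) by (destruct (D1 e4 He4); assert (Hx := D3 e4 He4 ltac:(lra)); lra).
assert (Mp2 : lo <= minpos ds) by (apply minpos_ge; auto).
assert (Mp3 : In (minpos ds) ds) by (destruct (minpos_in ds) as [E|E]; [rewrite E; auto|auto]).
split; [|split].
- eapply Rle_trans. apply maxle_le. eapply Rle_trans; [|apply Rmax_l]; lra.
  apply Rmax_lub. apply Rmax_l. eapply Rle_trans; [|apply Rmax_r]; lra.
- eapply Rle_trans. apply Mp2. apply maxle_ge; auto. apply Rmax_r.
- destruct (D5 (Rmin h 1)) as (e&He&He').
  { split. apply Rmin_glb; lra. apply Rmin_r. }
  eapply Rle_trans. apply (proj1 He'). apply maxle_ge; auto. eapply Rle_trans. apply (proj2 He').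
  eapply Rle_trans. apply Rmin_l. apply Rmax_l.
Qed.

Lemma in_ds (f : R -> R) (kv : knotvec) e :
  In e (map (fun kz => f (fst kz)) kv) <-> exists i, (i < length kv)%nat /\ e = f (bp kv i).
Proof. rewrite in_map_iff. split.
- intros (x&Hx&Hin). destruct (In_nth kv x (0, 0%nat) Hin) as (i&Hi&Hn). exists i; split; auto.
  unfold bp; rewrite Hn; auto.
- intros (i&Hi&->). exists (nth i kv (0,0%nat)); split; auto. apply nth_In; auto. Qed.

Lemma nth_map_fst (kv : knotvec) i : nth i (map fst kv) 0 = bp kv i.
Proof. unfold bp. change 0 with (fst (0, 0%nat)) at 1. apply map_nth. Qed.

Lemma kv_grid p kv lo hi : p_open p kv -> gaps_ok lo hi (map fst kv) ->
  grid (bp kv) (length kv - 1) lo hi.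
Proof. intros (H1&H2&H3&_) Hg. split; [auto|split; [auto|]].
  intros i Hi. assert (Hx := Hg i). rewrite length_map, !nth_map_fst in Hx. apply Hx; lia. Qed.

Lemma eta_bounds p Xi d lo hi h : (1 <= d <= 4)%nat -> p_open p (Xi (trans_dir d)) ->
  gaps_ok lo hi (map fst (Xi (trans_dir d))) -> 0 < lo -> lo <= hi -> 0 < h ->
  eta Xi h d <= Rmax h hi /\ lo <= eta Xi h d /\ Rmin h 1 - hi <= eta Xi h d.
Proof.
intros Hd Hp Hg Hlo Hlh Hh. unfold eta.
assert (G := kv_grid p _ lo hi Hp Hg).
set (kv := Xi (trans_dir d)) in *. set (N := (length kv - 1)%nat) in *.
assert (HN := grid_N _ _ _ _ Hlo G).
apply eta_core; auto.
assert (Hb : (d = 1 \/ d = 4)%nat \/ (d = 2 \/ d = 3)%nat) by lia.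
destruct Hb as [Hb|Hb].
- apply (grid_ds (bp kv) N lo hi); auto. intro e. rewrite in_ds. unfold N.
  split; intros (i&Hi&->); exists i; (split; [lia|]); destruct Hb as [->| ->]; reflexivity.
- apply (grid_ds (fun i => 1 - bp kv (N - i)%nat) N lo hi); auto. apply grid_rev; auto.
  intro e. rewrite in_ds. split.
  + intros (i&Hi&->). exists (N - i)%nat. split; [lia|]. replace (N - (N - i))%nat with i by (unfold N in *; lia).
    destruct Hb as [->| ->]; reflexivity.
  + intros (i&Hi&->). exists (N - i)%nat. split; [unfold N in *; lia|]. destruct Hb as [->| ->]; reflexivity.
Qed.

Lemma C1_const c : Cone (fun _ => c).
Proof. exists (fun _ => 0). split. intro; apply dconst. intros x; apply continuity_const; intros a b; auto. Qed.

Lemma C1_plus f g : Cone f -> Cone g -> Cone (fun x => f x + g x).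
Proof. intros (f'&Hf&Cf) (g'&Hg&Cg). exists (fun x => f' x + g' x). split.
  intro x; eapply dplus; eauto. apply continuity_plus; auto. Qed.

Lemma C1_cont f : Cone f -> continuity f.
Proof. intros (f'&Hf&_) x. apply derivable_continuous_pt. exists (f' x). apply Hf. Qed.

Lemma C1_mult f g : Cone f -> Cone g -> Cone (fun x => f x * g x).
Proof. intros Hf0 Hg0. assert (Cf0 := C1_cont f Hf0). assert (Cg0 := C1_cont g Hg0).
  destruct Hf0 as (f'&Hf&Cf), Hg0 as (g'&Hg&Cg). exists (fun x => f' x * g x + f x * g' x). split.
  intro x; eapply dmul; eauto. apply continuity_plus; apply continuity_mult; auto. Qed.

Lemma C1_id : Cone (fun x => x).
Proof. exists (fun _ => 1). split. intro; apply did. intros x; apply continuity_const; intros a b; auto. Qed.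

Lemma C1_comp f g : Cone f -> Cone g -> Cone (fun x => f (g x)).
Proof. intros Hf0 Hg0. assert (Cg0 := C1_cont g Hg0).
  destruct Hf0 as (f'&Hf&Cf), Hg0 as (g'&Hg&Cg). exists (fun x => f' (g x) * g' x). split.
  intro x; eapply dcomp; eauto. apply continuity_mult; auto. intro x. apply continuity_pt_comp; auto. Qed.

Lemma C1_peval c : Cone (peval c).
Proof. induction c as [|a c IH]; simpl.
- apply C1_const.
- apply (C1_plus (fun _ => a) (fun x => x * peval c x)). apply C1_const. apply C1_mult; auto. apply C1_id. Qed.

Lemma C1_minus_l (f : R -> R) k : Cone f -> Cone (fun x => f (k - x)).
Proof. intros H. apply (C1_comp f (fun x => k - x)); auto.
  exists (fun _ => -1). split. intro; eapply dminus. apply dconst. apply did. ring.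
  intros x; apply continuity_const; intros a b; auto. Qed.

Lemma C1_shift (f : R -> R) k : Cone f -> Cone (fun x => f (x - k)).
Proof. intros H. apply (C1_comp f (fun x => x - k)); auto.
  exists (fun _ => 1). split. intro; eapply dminus. apply did. apply dconst. ring.
  intros x; apply continuity_const; intros a b; auto. Qed.

Definition kv_ok (lo : R) (kv : knotvec) :=
  (2 <= length kv)%nat /\ bp kv 0 = 0 /\ bp kv (length kv - 1) = 1 /\
  forall i, (S i < length kv)%nat -> lo <= bp kv (S i) - bp kv i.

Lemma spline_end p kv lo g e : kv_ok lo kv -> 0 < e <= lo -> Sp p kv g ->
  (exists G, Cone G /\ forall t, 0 <= t <= e -> g t = G t) /\
  (exists G, Cone G /\ forall t, 0 <= t <= e -> g (1 - t) = G t).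
Proof.
intros (K1&K2&K3&K4) He (P&HP&_). split.
- exists (peval (P 0%nat)). split. apply C1_peval.
  intros t Ht. destruct (HP 0%nat ltac:(lia)) as (_&H). apply H.
  assert (Hx := K4 0%nat ltac:(lia)). lra.
- exists (fun t => peval (P (length kv - 2)%nat) (1 - t)). split. apply C1_minus_l, C1_peval.
  intros t Ht. destruct (HP (length kv - 2)%nat ltac:(lia)) as (_&H). apply H.
  replace (S (length kv - 2)) with (length kv - 1)%nat by lia.
  assert (Hx := K4 (length kv - 2)%nat ltac:(lia)).
  replace (S (length kv - 2)) with (length kv - 1)%nat in Hx by lia. lra.
Qed.

Lemma Int_part_0 r : 0 <= r < 1 -> Int_part r = 0%Z.
Proof. intros H. unfold Int_part. rewrite <- (tech_up r 1); [reflexivity| |]; simpl; lra. Qed.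

Definition Pt (d : nat) (t : R) : R * R :=
  match d with 1%nat => (0, t) | 2%nat => (t, 1) | 3%nat => (1, 1 - t) | _ => (1 - t, 0) end.

Lemma gamma_side d t : (1 <= d <= 4)%nat -> 0 <= t < 1 -> gamma (INR d - 1 + t) = Pt d t.
Proof.
intros Hd Ht. unfold gamma.
assert (HI : forall d', (d' <= 3)%nat -> INR d = INR d' + 1 -> Int_part ((INR d - 1 + t)/4) = 0%Z).
{ intros d' Hd' E. apply Int_part_0. rewrite E. assert (INR d' <= 3) by (replace 3 with (INR 3) by (simpl; ring); apply le_INR; lia).
  pose proof (pos_INR d'). split; apply Rmult_le_reg_r with 4 || apply Rmult_lt_reg_r with 4; try lra;
  unfold Rdiv; rewrite Rmult_assoc, Rinv_l; lra. }
destruct d as [|[|[|[|[|d]]]]]; try lia; simpl INR in *.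
- rewrite (HI 0%nat) by (simpl; lia || ring). simpl IZR. replace (1 - 1 + t - 4 * 0) with t by ring.
  destruct Rlt_dec; [reflexivity|lra].
- rewrite (HI 1%nat) by (simpl; lia || ring). simpl IZR. replace (1 + 1 - 1 + t - 4 * 0) with (1 + t) by ring.
  destruct Rlt_dec; [lra|]. destruct Rlt_dec; [|lra]. simpl. f_equal; ring.
- rewrite (HI 2%nat) by (simpl; lia || ring). simpl IZR. replace (1 + 1 + 1 - 1 + t - 4 * 0) with (2 + t) by ring.
  destruct Rlt_dec; [lra|]. destruct Rlt_dec; [lra|]. destruct Rlt_dec; [|lra]. simpl. f_equal; ring.
- rewrite (HI 3%nat) by (simpl; lia || ring). simpl IZR. replace (1 + 1 + 1 + 1 - 1 + t - 4 * 0) with (3 + t) by ring.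
  destruct Rlt_dec; [lra|]. destruct Rlt_dec; [lra|]. destruct Rlt_dec; [lra|]. simpl. f_equal; ring.
Qed.

Lemma term_C1 p kv1 kv2 lo d e f g : (1 <= d <= 4)%nat -> kv_ok lo kv1 -> kv_ok lo kv2 -> 0 < e <= lo ->
  Sp p kv1 f -> Sp p kv2 g ->
  exists G, Cone G /\ forall t, 0 <= t <= e -> f (fst (Pt d t)) * g (snd (Pt d t)) = G t.
Proof.
intros Hd K1 K2 He Sf Sg.
destruct (spline_end p kv1 lo f e K1 He Sf) as ((F1&CF1&EF1)&(F2&CF2&EF2)).
destruct (spline_end p kv2 lo g e K2 He Sg) as ((G1&CG1&EG1)&(G2&CG2&EG2)).
destruct d as [|[|[|[|[|d]]]]]; try lia; simpl Pt; simpl fst; simpl snd.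
- exists (fun t => f 0 * G1 t). split. apply C1_mult; auto. apply C1_const. intros; rewrite EG1; auto.
- exists (fun t => F1 t * g 1). split. apply C1_mult; auto. apply C1_const. intros; rewrite EF1; auto.
- exists (fun t => f 1 * G2 t). split. apply C1_mult; auto. apply C1_const. intros; rewrite EG2; auto.
- exists (fun t => F2 t * g 0). split. apply C1_mult; auto. apply C1_const. intros; rewrite EF2; auto.
Qed.

Lemma Pt_bd d t : (1 <= d <= 4)%nat -> 0 <= t <= 1 -> on_boundary (fst (Pt d t)) (snd (Pt d t)).
Proof. intros Hd Ht. unfold on_boundary.
destruct d as [|[|[|[|[|d]]]]]; try lia; simpl; repeat split; lra. Qed.

Lemma side_C1 p kv1 kv2 lo d e w : (1 <= d <= 4)%nat -> kv_ok lo kv1 -> kv_ok lo kv2 -> 0 < e <= lo -> e < 1 ->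
  trace_sp p kv1 kv2 w ->
  exists F, Cone F /\ forall t, INR d - 1 <= t <= INR d - 1 + e -> wg w t = F t.
Proof.
intros Hd K1 K2 He He1 (v&(l&HF&Hv)&Hb).
assert (Cl : exists G, Cone G /\ forall t, 0 <= t <= e ->
  fold_right (fun fg acc => fst fg (fst (Pt d t)) * snd fg (snd (Pt d t)) + acc) 0 l = G t).
{ clear Hv Hb. induction l as [|[f g] l IH].
  - exists (fun _ => 0). split. apply C1_const. intros; reflexivity.
  - inversion HF as [|? ? [Sf Sg] HF']; subst. destruct (IH HF') as (G&CG&EG).
    destruct (term_C1 p kv1 kv2 lo d e f g Hd K1 K2 He Sf Sg) as (T&CT&ET).
    exists (fun t => T t + G t). split. apply C1_plus; auto.
    intros t Ht. simpl. rewrite <- ET, <- EG; auto. }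
destruct Cl as (G&CG&EG).
exists (fun t => G (t - (INR d - 1))). split. apply C1_shift; auto.
intros t Ht. rewrite <- EG by lra. rewrite <- Hv.
unfold wg. replace t with (INR d - 1 + (t - (INR d - 1))) at 1 by ring.
rewrite gamma_side by (auto; lra).
destruct (Pt d (t - (INR d - 1))) as [x y] eqn:EP.
apply Hb. replace x with (fst (Pt d (t - (INR d - 1)))) by (rewrite EP; auto).
replace y with (snd (Pt d (t - (INR d - 1)))) by (rewrite EP; auto). apply Pt_bd; auto; lra.
Qed.

Lemma split_nonneg (f : R -> R) a c b v : a <= c <= b -> (forall x, 0 <= f x) -> is_RInt f a b v ->
  0 <= RInt f a c /\ RInt f a c <= v /\ 0 <= v.
Proof.
intros Hc Hf Hv.
assert (E : ex_RInt f a b) by (eexists; exact Hv).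
assert (E1 : ex_RInt f a c) by (apply (ex_RInt_Chasles_1 (V:=RCN)) with b; auto).
assert (E2 : ex_RInt f c b) by (apply (ex_RInt_Chasles_2 (V:=RCN)) with a; auto).
assert (V : v = RInt f a c + RInt f c b).
{ apply (uniq_R f a b). exact Hv. apply (is_RInt_Chasles (V:=RCN)) with c; apply (RInt_correct (V:=RCN)); auto. }
assert (0 <= RInt f a c) by (apply RInt_ge_0; auto; lra).
assert (0 <= RInt f c b) by (apply RInt_ge_0; auto; lra).
lra.
Qed.

Lemma side_bound w d e Hw L2w F : (1 <= d <= 4)%nat -> 0 < e < 1 -> Cone F ->
  (forall t, INR d - 1 <= t <= INR d - 1 + e -> wg w t = F t) ->
  side_H1sq w d Hw -> side_L2sq w d L2w ->
  (wg w (INR d - 1))^2 <= 2 / e * L2w + e * Hw /\ 0 <= Hw /\ 0 <= L2w.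
Proof.
intros Hd He CF EF (dw&l&Hder&Hint) HL.
set (a := INR d - 1) in *. assert (Ed : INR d = a + 1) by (unfold a; ring).
destruct (trace1 F a e CF ltac:(lra)) as (F'&HdF&CF'&Htr).
unfold side_L2sq in HL. rewrite Ed in HL, Hint, Hder.
assert (IL := int1_is _ _ _ _ HL). replace (a + 1 - 1) with a in IL by ring. assert (IH := int1_is _ _ _ _ Hint).
destruct (split_nonneg _ a (a+e) (a+1) _ ltac:(lra) (fun x => pow2_ge_0 _) IL) as (L1&L2&L3).
destruct (split_nonneg _ a (a+e) (a+1) _ ltac:(lra) (fun x => pow2_ge_0 _) IH) as (H1&H2&H3).
assert (RL : RInt (fun x => (F x)^2) a (a+e) = RInt (fun t => (wg w t)^2) a (a+e)).
{ apply RInt_ext. intros x Hx. rewrite Rmin_left, Rmax_right in Hx by lra. rewrite EF; auto; lra. }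
assert (RH : RInt (fun x => (F' x)^2) a (a+e) = RInt (fun t => (dw t)^2) a (a+e)).
{ assert (E : ex_RInt (fun t => (dw t)^2) a (a+1)) by (eexists; exact IH).
  assert (E1 : ex_RInt (fun t => (dw t)^2) a (a+e)) by (apply (ex_RInt_Chasles_1 (V:=RCN)) with (a+1); auto; lra).
  apply (is_RInt_unique (V:=RCN)).
  apply (is_RInt_fin_ext l a (a+e) (fun t => (dw t)^2)); [lra| |apply (RInt_correct (V:=RCN)); auto].
  intros x Hx Hn. f_equal.
  apply (uniqueness_limite F x). 2: apply HdF.
  apply dloc with (wg w) (Rmin (x - a) (a + e - x)).
  - apply Rmin_glb_lt; lra.
  - intros y Hy. apply EF. apply Rabs_lt_between in Hy.
    assert (Rmin (x - a) (a + e - x) <= x - a) by apply Rmin_l.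
    assert (Rmin (x - a) (a + e - x) <= a + e - x) by apply Rmin_r. lra.
  - apply Hder; auto; lra. }
rewrite RL, RH in Htr. unfold a in *.
assert (0 < 2 / e) by (apply Rdiv_lt_0_compat; lra).
split; [|split; auto].
replace (wg w (INR d - 1)) with (F (INR d - 1)) by (symmetry; apply EF; lra).
eapply Rle_trans; [exact Htr|]. apply Rplus_le_compat; apply Rmult_le_compat_l; lra.
Qed.

Lemma kv_le1 lo kv : kv_ok lo kv -> 0 <= lo -> forall i, (i < length kv)%nat -> bp kv i <= 1.
Proof.
intros (K1&K2&K3&K4) Hlo.
assert (C : forall m i, (i + m = length kv - 1)%nat -> bp kv i <= 1).
{ induction m; intros i Hi. replace i with (length kv - 1)%nat by lia; lra.
  assert (Hx := K4 i ltac:(lia)). assert (IH := IHm (S i) ltac:(lia)). lra. }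
intros i Hi. apply (C (length kv - 1 - i)%nat). lia.
Qed.

Lemma kv_lo1 lo kv : kv_ok lo kv -> 0 <= lo -> lo <= 1.
Proof. intros K Hlo. pose proof K as (K1&K2&K3&K4). assert (Hx := K4 0%nat ltac:(lia)).
  assert (bp kv 1 <= 1) by (apply (kv_le1 lo kv); auto; lia). lra. Qed.

Lemma kv_mono lo lo' kv : lo' <= lo -> kv_ok lo kv -> kv_ok lo' kv.
Proof. intros H (K1&K2&K3&K4). repeat split; auto. intros i Hi. specialize (K4 i Hi). lra. Qed.

Lemma simple_len p Z : (2 <= length Z)%nat -> length (simple_kv p Z) = length Z.
Proof. intros H. unfold simple_kv. rewrite length_combine. simpl. rewrite length_app, repeat_length. simpl. lia. Qed.

Lemma simple_bp p Z i : (2 <= length Z)%nat -> bp (simple_kv p Z) i = nth i Z 0.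
Proof. intros H. unfold bp, simple_kv. rewrite combine_nth. reflexivity.
  simpl. rewrite length_app, repeat_length. simpl. lia. Qed.

Lemma kv_ok_simple p lo hi Z : bpvec_ok lo hi Z -> kv_ok lo (simple_kv p Z).
Proof. intros (H1&H2&H3&H4). unfold kv_ok. rewrite simple_len by auto. rewrite !simple_bp by auto.
  repeat split; auto. intros i Hi. rewrite !simple_bp by auto. apply (H4 i Hi). Qed.

Lemma kv_ok_xi p lo hi kv : p_open p kv -> gaps_ok lo hi (map fst kv) -> kv_ok lo kv.
Proof. intros (H1&H2&H3&_) Hg. repeat split; auto. intros i Hi. assert (Hx := Hg i).
  rewrite length_map, !nth_map_fst in Hx. apply Hx; auto. Qed.

Lemma pow4_pos n : 0 < 4 ^ n.
Proof. apply pow_lt; lra. Qed.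

Lemma hlev_ge L hhat l : 0 < hhat -> (l <= L)%nat -> hhat <= hlev L hhat l.
Proof. intros Hh Hl. unfold hlev. replace L with (l + (L - l))%nat at 1 by lia. rewrite pow_add.
  assert (H1 := pow4_pos l). assert (1 <= 4 ^ (L - l)) by (apply pow_R1_Rle; lra).
  replace (hhat * (4 ^ l * 4 ^ (L - l)) / 4 ^ l) with (hhat * 4 ^ (L - l)) by (field; lra). nra. Qed.

Lemma hlev_SL L hhat : hlev L hhat (S L) = hhat / 4.
Proof. unfold hlev. simpl. assert (H1 := pow4_pos L). field. lra. Qed.

Lemma hlev_pos L hhat l : 0 < hhat -> 0 < hlev L hhat l.
Proof. intros. unfold hlev. assert (H1 := pow4_pos L). assert (H2 := pow4_pos l).
  apply Rdiv_lt_0_compat; auto. apply Rmult_lt_0_compat; auto. Qed.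

Section Lv.
Variables (C3 c0 : R) (p L : nat) (hhat : R) (Xi : nat -> knotvec) (Zc : nat -> nat -> list R).
Hypothesis HC3 : 0 < C3.
Hypothesis Hc0 : 0 < c0.
Hypothesis Hp : (1 <= p)%nat.
Hypothesis Hh : 0 < hhat.
Hypothesis HXi : forall d, (d = 1 \/ d = 2)%nat -> p_open p (Xi d) /\ gaps_ok (C3 * hhat) hhat (map fst (Xi d)).
Hypothesis HZ : forall d l, (d = 1 \/ d = 2)%nat -> (1 <= l <= L)%nat ->
       bpvec_ok (c0 * hlev L hhat l) (hlev L hhat l) (Zc d l).

Lemma lvl_trace l w : (1 <= l <= S L)%nat -> Wlev p L Xi Zc l w ->
  exists lo kv1 kv2, trace_sp p kv1 kv2 w /\ kv_ok lo kv1 /\ kv_ok lo kv2 /\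
    Rmin c0 (4 * C3) * hlev L hhat l <= lo.
Proof.
intros Hl (W1&W2). destruct (Nat.eq_dec l (S L)) as [E|E].
- exists (C3 * hhat), (Xi 1%nat), (Xi 2%nat). split; [auto|].
  destruct (HXi 1%nat) as (P1&G1); auto. destruct (HXi 2%nat) as (P2&G2); auto.
  split; [eapply kv_ok_xi; eauto|split; [eapply kv_ok_xi; eauto|]].
  rewrite E, hlev_SL. assert (Rmin c0 (4 * C3) <= 4 * C3) by apply Rmin_r. nra.
- destruct (W1 ltac:(lia)) as (T&_). exists (c0 * hlev L hhat l). do 2 eexists. split; [exact T|].
  split; [eapply kv_ok_simple, HZ; auto; lia|split; [eapply kv_ok_simple, HZ; auto; lia|]].
  assert (Rmin c0 (4 * C3) <= c0) by apply Rmin_l. assert (Hq := hlev_pos L hhat l Hh). nra.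
Qed.

Definition kt := Rmin c0 (4 * C3) / 2.
Definition KK := 2 / kt + kt.

Lemma kt_pos : 0 < kt.
Proof. unfold kt. assert (0 < Rmin c0 (4 * C3)) by (apply Rmin_glb_lt; lra). lra. Qed.

Lemma lvl_W l w dl Hw L2w : (1 <= l <= S L)%nat -> (1 <= dl <= 4)%nat -> Wlev p L Xi Zc l w ->
  side_H1sq w dl Hw -> side_L2sq w dl L2w ->
  (wg w (INR dl - 1))^2 <= KK * (hlev L hhat l / INR p * Hw + INR p / hlev L hhat l * L2w) /\ 0 <= Hw /\ 0 <= L2w.
Proof.
intros Hl Hd Wl HH HL. set (h := hlev L hhat l). assert (Hhp : 0 < h) by apply hlev_pos, Hh.
assert (HP : 1 <= INR p) by (replace 1 with (INR 1) by reflexivity; apply le_INR; lia).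
destruct (lvl_trace l w Hl Wl) as (lo&kv1&kv2&T&K1&K2&Hlo).
assert (Hkt := kt_pos).
set (e := kt * h / INR p).
assert (He0 : 0 < e) by (unfold e; apply Rdiv_lt_0_compat; [nra|lra]).
assert (Hlo0 : 0 < lo) by (unfold kt in Hkt; fold h in Hlo; nra).
assert (Hlo1 := kv_lo1 lo kv1 K1 ltac:(lra)).
assert (Hel : e <= lo / 2).
{ unfold e. fold h in Hlo. unfold kt. apply Rmult_le_reg_r with (INR p); [lra|].
  unfold Rdiv. rewrite Rmult_assoc, Rinv_l by lra.
  assert (0 <= Rmin c0 (4 * C3)) by (apply Rmin_glb; lra). nra. }
destruct (side_C1 p kv1 kv2 lo dl e w Hd K1 K2 ltac:(lra) ltac:(lra) T) as (F&CF&EF).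
destruct (side_bound w dl e Hw L2w F Hd ltac:(lra) CF EF HH HL) as (B&B1&B2).
split; [|auto].
eapply Rle_trans; [exact B|]. unfold KK.
replace (2 / e * L2w) with (2 / kt * (INR p / h * L2w)) by (unfold e; field; repeat split; lra).
replace (e * Hw) with (kt * (h / INR p * Hw)) by (unfold e; field; lra).
assert (0 <= h / INR p * Hw) by (apply Rmult_le_pos; auto; apply Rdiv_le_0_compat; lra).
assert (0 <= INR p / h * L2w) by (apply Rmult_le_pos; auto; apply Rdiv_le_0_compat; lra).
assert (0 < 2 / kt) by (apply Rdiv_lt_0_compat; lra).
nra.
Qed.

Definition kap := Rmin (Rmin (1/2) (C3/2)) (C3 * c0 / (1 + C3)).

Lemma lvl_eta l d : (1 <= l <= S L)%nat -> (1 <= d <= 4)%nat ->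
  kap * hlev L hhat l <= eta Xi (hlev L hhat l) d <= 4 * hlev L hhat l.
Proof.
intros Hl Hd. set (h := hlev L hhat l). assert (Hhp : 0 < h) by apply hlev_pos, Hh.
assert (Htd : (trans_dir d = 1 \/ trans_dir d = 2)%nat) by (destruct d as [|[|[|[|[|d]]]]]; simpl; lia).
destruct (HXi _ Htd) as (P&G).
assert (HC31 : C3 * hhat <= hhat).
{ destruct P as (P1&_). assert (Hx := G 0%nat). rewrite length_map in Hx. specialize (Hx ltac:(lia)). lra. }
destruct (eta_bounds p Xi d (C3 * hhat) hhat h Hd P G ltac:(nra) HC31 Hhp) as (E1&E2&E3).
fold h.
assert (Hk1 : kap <= 1/2) by (unfold kap; eapply Rle_trans; [apply Rmin_l|apply Rmin_l]).
assert (Hk2 : kap <= C3/2) by (unfold kap; eapply Rle_trans; [apply Rmin_l|apply Rmin_r]).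
assert (Hk3 : kap <= C3 * c0 / (1 + C3)) by (unfold kap; apply Rmin_r).
destruct (Nat.eq_dec l (S L)) as [Ee|Ee].
- assert (Eh : h = hhat / 4) by (unfold h; rewrite Ee; apply hlev_SL).
  split.
  + nra.
  + eapply Rle_trans; [exact E1|]. apply Rmax_lub; lra.
- assert (Hge : hhat <= h) by (apply hlev_ge; auto; lia).
  assert (Hc0h : c0 * h <= 1).
  { assert (K := kv_ok_simple p _ _ _ (HZ 1%nat l ltac:(auto) ltac:(lia))). fold h in K.
    apply (kv_lo1 _ _ K). nra. }
  split.
  + destruct (Rle_dec h 1) as [H1|H1].
    * rewrite Rmin_left in E3 by lra.
      destruct (Rle_dec (2 * hhat) h); nra.
    * rewrite Rmin_right in E3 by lra.
      assert (C3 / (1 + C3) <= eta Xi h d).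
      { replace (C3 / (1 + C3)) with (C3 * (1 / (1 + C3))) by (field; lra).
        assert (E4 : 1 - 1 / (1 + C3) = C3 * (1 / (1 + C3))) by (field; lra).
        destruct (Rle_dec (1 / (1 + C3)) hhat) as [H2|H2].
        - assert (C3 * (1 / (1 + C3)) <= C3 * hhat) by (apply Rmult_le_compat_l; lra). lra.
        - lra. }
      assert (kap * h <= C3 * c0 / (1 + C3) * h) by (apply Rmult_le_compat_r; lra).
      assert (C3 * c0 / (1 + C3) * h = C3 / (1 + C3) * (c0 * h)) by (field; lra).
      assert (C3 / (1 + C3) * (c0 * h) <= C3 / (1 + C3)).
      { assert (0 <= C3 / (1 + C3)) by (apply Rdiv_le_0_compat; lra). nra. }
      lra.
  + eapply Rle_trans; [exact E1|]. apply Rmax_lub; lra.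
Qed.

End Lv.

Lemma vext_form p Xi dl : (1 <= dl <= 4)%nat -> exists dx dy sx sy,
  (1 <= dx <= 4)%nat /\ (1 <= dy <= 4)%nat /\ forall h w,
  vext p Xi h dl w = (fun x y => wg w (INR dl - 1) * Phi p (eta Xi h dx) (sg sx x) * Phi p (eta Xi h dy) (sg sy y)).
Proof.
intros Hd. destruct dl as [|[|[|[|[|dl]]]]]; try lia.
- exists 1%nat, 4%nat, false, false. split; [lia|split; [lia|]]. intros h w.
  apply functional_extensionality; intro x; apply functional_extensionality; intro y.
  unfold vext, wg, theta, Phi, sg. simpl prev_side. simpl side_dist. destruct (gamma _). ring.
- exists 1%nat, 2%nat, false, true. split; [lia|split; [lia|]]. intros h w.
  apply functional_extensionality; intro x; apply functional_extensionality; intro y.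
  unfold vext, wg, theta, Phi, sg. simpl prev_side. simpl side_dist. destruct (gamma _). ring.
- exists 3%nat, 2%nat, true, true. split; [lia|split; [lia|]]. intros h w.
  apply functional_extensionality; intro x; apply functional_extensionality; intro y.
  unfold vext, wg, theta, Phi, sg. simpl prev_side. simpl side_dist. destruct (gamma _). ring.
- exists 3%nat, 4%nat, true, false. split; [lia|split; [lia|]]. intros h w.
  apply functional_extensionality; intro x; apply functional_extensionality; intro y.
  unfold vext, wg, theta, Phi, sg. simpl prev_side. simpl side_dist. destruct (gamma _). ring.
Qed.

Lemma prod_bound X Y A B P : 0 <= X -> X <= P / B -> 0 <= Y -> Y <= A / (P + 1) -> 0 < P -> 0 <= A -> 0 < B ->
  X * Y <= A / B.
Proof.
intros. assert (X * Y <= P / B * (A / (P + 1))) by (apply Rmult_le_compat; auto).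
assert (P / B * (A / (P + 1)) = A / B * (P / (P + 1))) by (field; lra).
assert (P / (P + 1) <= 1). { apply Rmult_le_reg_r with (P + 1); [lra|]. unfold Rdiv. rewrite Rmult_assoc, Rinv_l; lra. }
assert (0 <= A / B) by (apply Rdiv_le_0_compat; lra).
nra.
Qed.

Lemma ratio_bound A B hA hB k : 0 < k -> 0 <= A <= 4 * hA -> k * hB <= B -> 0 < hB -> A / B <= 4 / k * (hA / hB).
Proof.
intros Hk HA HB Hh. assert (0 < k * hB) by nra.
replace (4 / k * (hA / hB)) with (4 * hA / (k * hB)) by (field; lra).
assert (/B <= /(k*hB)) by (apply Rinv_le_contravar; lra).
unfold Rdiv. apply Rle_trans with (A * /(k*hB)). apply Rmult_le_compat_l; lra.
apply Rmult_le_compat_r; [left; apply Rinv_0_lt_compat; lra| lra].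
Qed.

Lemma T_bound P k hl hn a1 b1 a2 b2 IA IB Ic1 Ic2 : 0 < P -> 0 < k -> 0 < hl -> 0 < hn ->
  k * hl <= a1 <= 4 * hl -> k * hl <= a2 <= 4 * hl -> k * hn <= b1 <= 4 * hn -> k * hn <= b2 <= 4 * hn ->
   0 <= IA -> IA <= P / a1 -> IA <= P / b1 ->
   0 <= Ic1 -> Ic1 <= a2 / (P + 1) -> Ic1 <= b2 / (P + 1) ->
   0 <= IB -> IB <= a1 / (P + 1) -> IB <= b1 / (P + 1) ->
   0 <= Ic2 -> Ic2 <= P / a2 -> Ic2 <= P / b2 ->
  IA * Ic1 + IB * Ic2 <= 8 / k * (Rmin hl hn / Rmax hl hn).
Proof.
intros. destruct (Rle_dec hl hn) as [Hc|Hc].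
- rewrite Rmin_left, Rmax_right by lra.
  assert (IA * Ic1 <= a2 / b1) by (apply prod_bound with P; auto; nra).
  assert (Ic2 * IB <= a1 / b2) by (apply prod_bound with P; auto; nra).
  assert (a2 / b1 <= 4 / k * (hl / hn)) by (apply ratio_bound; auto; nra).
  assert (a1 / b2 <= 4 / k * (hl / hn)) by (apply ratio_bound; auto; nra).
  replace (8 / k) with (2 * (4 / k)) by (field; lra). nra.
- rewrite Rmin_right, Rmax_left by lra.
  assert (IA * Ic1 <= b2 / a1) by (apply prod_bound with P; auto; nra).
  assert (Ic2 * IB <= b1 / a2) by (apply prod_bound with P; auto; nra).
  assert (b2 / a1 <= 4 / k * (hn / hl)) by (apply ratio_bound; auto; nra).
  assert (b1 / a2 <= 4 / k * (hn / hl)) by (apply ratio_bound; auto; nra).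
  replace (8 / k) with (2 * (4 / k)) by (field; lra). nra.
Qed.

Lemma kap_pos C3 c0 : 0 < C3 -> 0 < c0 -> 0 < kap C3 c0.
Proof. intros. unfold kap. apply Rmin_glb_lt. apply Rmin_glb_lt; lra.
  apply Rdiv_lt_0_compat; nra. Qed.

Lemma KK_pos C3 c0 : 0 < C3 -> 0 < c0 -> 0 < KK C3 c0.
Proof. intros. assert (H1 := kt_pos C3 c0 H H0). unfold KK.
  assert (0 < 2 / kt C3 c0) by (apply Rdiv_lt_0_compat; lra). lra. Qed.

Theorem mainTheorem10 :
  forall C3 c0 : R, 0 < C3 -> 0 < c0 ->
  exists c : R, 0 < c /\
  forall (p L : nat) (hhat : R) (Xi : nat -> knotvec) (Zc : nat -> nat -> list R),
    (1 <= p)%nat -> (1 <= L)%nat -> 0 < hhat ->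
    (forall d, (d = 1 \/ d = 2)%nat ->
       p_open p (Xi d) /\ gaps_ok (C3 * hhat) hhat (map fst (Xi d))) ->
    (forall d l, (d = 1 \/ d = 2)%nat -> (1 <= l <= L)%nat ->
       bpvec_ok (c0 * hlev L hhat l) (hlev L hhat l) (Zc d l)) ->
    (forall d l, (d = 1 \/ d = 2)%nat -> (1 <= l < L)%nat ->
       incl (Zc d l) (Zc d (S l))) ->
    (forall d, (d = 1 \/ d = 2)%nat -> Zc d L = map fst (Xi d)) ->
    forall (l n dl : nat) (w q : R -> R -> R),
      (1 <= l <= S L)%nat -> (1 <= n <= S L)%nat -> (1 <= dl <= 4)%nat ->
      Wlev p L Xi Zc l w -> Wlev p L Xi Zc n q ->
      forall I Hw Hq L2w L2q : R,
        H1ip (vext p Xi (hlev L hhat l) dl w) (vext p Xi (hlev L hhat n) dl q) I ->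
        side_H1sq w dl Hw -> side_H1sq q dl Hq ->
        side_L2sq w dl L2w -> side_L2sq q dl L2q ->
        let hl := hlev L hhat l in
        let hn := hlev L hhat n in
        Rabs I <= c * (Rmin hl hn / Rmax hl hn) *
          (hl / INR p * Hw + hn / INR p * Hq + INR p / hl * L2w + INR p / hn * L2q).
Proof.
intros C3 c0 HC3 Hc0.
assert (Hk := kap_pos C3 c0 HC3 Hc0). assert (HK := KK_pos C3 c0 HC3 Hc0).
exists (4 * KK C3 c0 / kap C3 c0). split. apply Rdiv_lt_0_compat; lra.
intros p L hhat Xi Zc Hp HL Hh HXi HZ Hinc HZL l n dl w q Hl Hn Hdl Wl Wn I Hw Hq L2w L2q HI HHw HHq HLw HLq hl hn.
destruct (vext_form p Xi dl Hdl) as (dx&dy&sx&sy&Hdx&Hdy&Ev). rewrite !Ev in HI.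
assert (Ex1 := lvl_eta C3 c0 p L hhat Xi Zc HC3 Hc0 Hp Hh HXi HZ l dx Hl Hdx).
assert (Ex2 := lvl_eta C3 c0 p L hhat Xi Zc HC3 Hc0 Hp Hh HXi HZ n dx Hn Hdx).
assert (Ey1 := lvl_eta C3 c0 p L hhat Xi Zc HC3 Hc0 Hp Hh HXi HZ l dy Hl Hdy).
assert (Ey2 := lvl_eta C3 c0 p L hhat Xi Zc HC3 Hc0 Hp Hh HXi HZ n dy Hn Hdy).
fold hl hn in Ex1, Ex2, Ey1, Ey2.
assert (Hhl : 0 < hl) by apply hlev_pos, Hh. assert (Hhn : 0 < hn) by apply hlev_pos, Hh.
fold hl hn in HI.
destruct (core2D p (wg w (INR dl - 1)) (wg q (INR dl - 1)) (eta Xi hl dx) (eta Xi hn dx) (eta Xi hl dy) (eta Xi hn dy) sx sy I Hp ltac:(nra) ltac:(nra) ltac:(nra) ltac:(nra) HI)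
  as (IA&IB&Ic1&Ic2&EI&B1&B2&B3&B4&B5&B6&B7&B8&B9&B10&B11&B12).
assert (HP : 1 <= INR p) by (replace 1 with (INR 1) by reflexivity; apply le_INR; lia).
assert (T := T_bound (INR p) (kap C3 c0) hl hn _ _ _ _ IA IB Ic1 Ic2 ltac:(lra) Hk Hhl Hhn
   Ex1 Ey1 Ex2 Ey2 B1 B2 B3 B4 B5 B6 B7 B8 B9 B10 B11 B12).
destruct (lvl_W C3 c0 p L hhat Xi Zc HC3 Hc0 Hp Hh HXi HZ l w dl Hw L2w Hl Hdl Wl HHw HLw) as (Wb&Hw0&L2w0).
destruct (lvl_W C3 c0 p L hhat Xi Zc HC3 Hc0 Hp Hh HXi HZ n q dl Hq L2q Hn Hdl Wn HHq HLq) as (Qb&Hq0&L2q0).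
fold hl in Wb. fold hn in Qb.
set (W := wg w (INR dl - 1)) in *. set (Q := wg q (INR dl - 1)) in *.
set (K := KK C3 c0) in *. set (k := kap C3 c0) in *.
set (Sl := hl / INR p * Hw + INR p / hl * L2w) in *.
set (Sn := hn / INR p * Hq + INR p / hn * L2q) in *.
assert (HSl : 0 <= Sl). { unfold Sl. apply Rplus_le_le_0_compat; apply Rmult_le_pos; try assumption; left; apply Rdiv_lt_0_compat; lra. }
assert (HSn : 0 <= Sn). { unfold Sn. apply Rplus_le_le_0_compat; apply Rmult_le_pos; try assumption; left; apply Rdiv_lt_0_compat; lra. }
replace (hl / INR p * Hw + hn / INR p * Hq + INR p / hl * L2w + INR p / hn * L2q) with (Sl + Sn) by (unfold Sl, Sn; ring).
set (rho := Rmin hl hn / Rmax hl hn) in *.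
assert (Hrho : 0 <= rho).
{ unfold rho. apply Rdiv_le_0_compat. apply Rmin_glb; lra. eapply Rlt_le_trans; [exact Hhl|apply Rmax_l]. }
set (Tt := IA * Ic1 + IB * Ic2) in *.
assert (HT : 0 <= Tt) by (unfold Tt; nra).
assert (WQ : Rabs W * Rabs Q <= K / 2 * (Sl + Sn)).
{ assert (E1 : Rabs W ^ 2 = W ^ 2) by (rewrite <- Rsqr_pow2, <- Rsqr_abs, Rsqr_pow2; reflexivity).
  assert (E2 : Rabs Q ^ 2 = Q ^ 2) by (rewrite <- Rsqr_pow2, <- Rsqr_abs, Rsqr_pow2; reflexivity).
  assert (0 <= (Rabs W - Rabs Q)^2) by apply pow2_ge_0. nra. }
rewrite EI. rewrite Rabs_mult, Rabs_mult, (Rabs_right Tt) by lra.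
assert (Rabs W * Rabs Q * Tt <= K / 2 * (Sl + Sn) * (8 / k * rho)).
{ apply Rmult_le_compat; auto. apply Rmult_le_pos; apply Rabs_pos. }
replace (4 * K / k * rho * (Sl + Sn)) with (K / 2 * (Sl + Sn) * (8 / k * rho)) by (field; lra).
exact H.
Qed.
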